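(* Let $\mathcal{R}\subset\mathbb{R}_{>0}^n$ be a compact log-convex set and let $\ell:\mathcal{R}\to\mathbb{R}_{>0}$ be continuous. Then for every $\tilde\varepsilon>0$ there exist a positive integer $p$ and, with $T=1/p$, two functions $\psi_T,\psi'_T\in\mathrm{GPOS}_T$ with rational parameters such that for all $\mathbf{x}\in\mathcal{R}$, $$\left|\frac{\ell(\mathbf{x})-\psi_T(\mathbf{x})/\psi'_T(\mathbf{x})}{\min\big(\ell(\mathbf{x}),\psi_T(\mathbf{x})/\psi'_T(\mathbf{x})\big)}\right|\leqslant\tilde\varepsilon.$$
   Context: A set $\mathcal{R}\subset\mathbb{R}_{>0}^n$ is log-convex if its image under the entrywise logarithm is convex. A posynomial is a function $\psi:\mathbb{R}_{>0}^n\to\mathbb{R}_{>0}$, $\psi(\mathbf{x})=\sum_{k=1}^K c_k\mathbf{x}^{\boldsymbol{\alpha}^{(k)}}$, with $K$ a positive integer, $c_k>0$, $\boldsymbol{\alpha}^{(k)}\in\mathbb{R}^n$, and $\mathbf{x}^{\boldsymbol{\alpha}}=x_1^{\alpha_1}\cdots x_n^{\alpha_n}$. For $T>0$, $\mathrm{GPOS}_T$ is the class of functions $\psi_T(\mathbf{x})=(\psi(\mathbf{x}^{1/T}))^T$ with $\psi$ a posynomial (powers taken entrywise). $\psi_T\in\mathrm{GPOS}_T$ has rational parameters if it can be written so with $T$ rational, all entries of the $\boldsymbol{\alpha}^{(k)}$ rational, and all $\log c_k$ rational. *)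

(* Defs.v *)
From HB Require Import structures.
From mathcomp Require Import all_boot all_order all_algebra.
From mathcomp Require Import all_classical all_reals all_analysis.
Set Implicit Arguments. Unset Strict Implicit. Unset Printing Implicit Defensive.
Import Order.TTheory GRing.Theory Num.Theory.
Import numFieldNormedType.Exports.
Local Open Scope classical_set_scope.
Local Open Scope ring_scope.

Section Defs.
Variable R : realType.
Variable n : nat.

Definition pos_orthant : set 'rV[R]_n := [set x | forall i, 0 < x ord0 i].

Definition vlog (x : 'rV[R]_n) : 'rV[R]_n := map_mx (@ln R) x.

Definition log_convex (A : set 'rV[R]_n) : Prop :=
  A `<=` pos_orthant /\
  let L := vlog @` A in
  forall u v t, L u -> L v -> 0 <= t -> t <= 1 -> L (t *: u + (1 - t) *: v).

Definition monomial (alpha x : 'rV[R]_n) : R := \prod_(i < n) (x ord0 i `^ alpha ord0 i).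

Definition posynomial (K : nat) (c : 'I_K -> R) (alpha : 'I_K -> 'rV[R]_n)
  (x : 'rV[R]_n) : R := \sum_(k < K) c k * monomial (alpha k) x.

Definition posynomial_data (K : nat) (c : 'I_K -> R) (alpha : 'I_K -> 'rV[R]_n) : Prop :=
  (0 < K)%N /\ forall k, 0 < c k.

Definition gpos (T : R) (K : nat) (c : 'I_K -> R) (alpha : 'I_K -> 'rV[R]_n)
  (x : 'rV[R]_n) : R :=
  (posynomial c alpha (map_mx (fun xi => xi `^ T^-1) x)) `^ T.

(* rational parameters of the posynomial part: rational exponents, rational log c_k
   (T = 1/p is rational by construction in the theorem) *)
Definition rational_params (K : nat) (c : 'I_K -> R) (alpha : 'I_K -> 'rV[R]_n) : Prop :=
  (forall k i, exists q : rat, alpha k ord0 i = ratr q) /\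
  (forall k, exists q : rat, ln (c k) = ratr q).

End Defs.

(* Main.v *)
Require Import Defs.
From HB Require Import structures.
From mathcomp Require Import all_boot all_order all_algebra.
From mathcomp Require Import all_classical all_reals all_analysis.
From mathcomp Require Import ring lra.
Import Order.TTheory GRing.Theory Num.Theory.
Import numFieldNormedType.Exports.
Local Open Scope classical_set_scope.
Local Open Scope ring_scope.
Set Implicit Arguments. Unset Strict Implicit.
Lemma ballE (R : realType) n (x y : 'rV[R]_n) d : 0 < d ->
  (forall i, `|x ord0 i - y ord0 i| < d) -> ball x d y.
Proof.
move=> d0 h; split => // i j; rewrite (ord1 i); exact: h.
Qed.
Lemma ballD (R : realType) n (x y : 'rV[R]_n) d : ball x d y -> 
  (forall i, `|x ord0 i - y ord0 i| < d).
Proof. by case=> _ h i; exact: h. Qed.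
Lemma cont_eps (R : realType) n (A : set 'rV[R]_n) (l : 'rV[R]_n -> R) :
  {within A, continuous l} -> forall x, A x -> forall e : R, 0 < e ->
  exists2 d : R, 0 < d & forall x', A x' -> (forall i, `|x ord0 i - x' ord0 i| < d) -> `|l x - l x'| < e.
Proof.
move=> /subspace_continuousP h x Ax e e0.
have := h x Ax => /cvgrPdist_lt /(_ e e0).
rewrite near_withinE => /nbhs_ballP[d d0 hd].
exists d => // x' Ax' hx'. apply: (hd x') => //. exact: ballE.
Qed.
Lemma unif_cont (R : realType) n (A : set 'rV[R]_n) (l : 'rV[R]_n -> R) :
  compact A -> {within A, continuous l} -> forall e : R, 0 < e ->
  exists2 d : R, 0 < d & forall x x', A x -> A x' ->
    (forall i, `|x ord0 i - x' ord0 i| < d) -> `|l x - l x'| < e.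
Proof.
move=> /compact_near_coveringP /near_covering_withinP cA cl e e0.
have := cA R (0^'+) (fun d x' => forall x'', A x'' ->
   (forall i, `|x' ord0 i - x'' ord0 i| < d) -> `|l x' - l x''| < e) _.
case.
- move=> x Ax.
  have e20 : 0 < e / 2 by rewrite divr_gt0.
  have [d d0 hd] := @cont_eps R n A l cl x Ax _ e20.
  have d20 : 0 < d / 2 by rewrite divr_gt0.
  exists (ball x (d / 2), [set r : R | 0 < r < d / 2]).
    split => /=. exact: nbhsx_ballx.
    exists (d/2) => // r /=; rewrite sub0r normrN => hr r0.
    by rewrite r0 /= (le_lt_trans (ler_norm r) hr).
  case=> x' r /= [bx' /andP[r0 rd]] Ax' x'' Ax'' hx''.
  have h1' : `|l x - l x'| < e / 2.
    apply: hd => // i; apply: lt_trans (ballD bx' i) _.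
    by rewrite ltr_pdivrMr // ltr_pMr // ltr1n.
  have h2 : `|l x - l x''| < e / 2.
    apply: hd => // i.
    rewrite (_ : x ord0 i - x'' ord0 i = (x ord0 i - x' ord0 i) + (x' ord0 i - x'' ord0 i)); last by ring.
    apply: le_lt_trans (ler_normD _ _) _.
    have := ballD bx' i; have := hx'' i; lra.
  rewrite (_ : l x' - l x'' = - (l x - l x') + (l x - l x'')); last by ring.
  apply: le_lt_trans (ler_normD _ _) _; rewrite normrN; lra.
- move=> r /= r0 H; exists (r / 2); first by rewrite divr_gt0.
  move=> x x' Ax Ax' hxx'; apply: (H (r/2)) => //.
    by rewrite /ball_ /= sub0r normrN gtr0_norm ?divr_gt0 // ltr_pdivrMr // ltr_pMr // ltr1n.
  by rewrite divr_gt0.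
Qed.
Lemma coord_cont (R : realType) n (i : 'I_n) : continuous (fun x : 'rV[R]_n => x ord0 i).
Proof. exact: coord_continuous. Qed.
Lemma coord_bounds (R : realType) n (A : set 'rV[R]_n) :
  compact A -> A `<=` @pos_orthant R n -> A !=set0 ->
  exists a b : R, [/\ 0 < a, 0 < b & forall x, A x -> forall i, a <= x ord0 i <= b].
Proof.
move=> cA Apos A0.
have hmin : forall i : 'I_n, exists a : R, 0 < a /\ forall x, A x -> a <= x ord0 i.
  move=> i; have [c /set_mem Ac hc] := EVT_min_rV A0 cA (continuous_subspaceT (@coord_cont R n i)).
  exists (c ord0 i); split; first exact: Apos.
  by move=> x Ax; apply: hc; apply: mem_set.
have hmax : forall i : 'I_n, exists b : R, 0 < b /\ forall x, A x -> x ord0 i <= b.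
  move=> i; have [c /set_mem Ac hc] := EVT_max_rV A0 cA (continuous_subspaceT (@coord_cont R n i)).
  exists (c ord0 i); split; first exact: Apos.
  by move=> x Ax; apply: hc; apply: mem_set.
have [fa hfa] := choice hmin.
have [fb hfb] := choice hmax.
have sa0 : 0 <= \sum_i (fa i)^-1 by apply: sumr_ge0 => i _; rewrite invr_ge0 ltW // (hfa i).1.
have sb0 : 0 <= \sum_i fb i by apply: sumr_ge0 => i _; rewrite ltW // (hfb i).1.
exists (1 + \sum_i (fa i)^-1)^-1, (1 + \sum_i fb i); split.
  by rewrite invr_gt0; lra.
  lra.
move=> x Ax i; apply/andP; split.
  have fai := (hfa i).1.
  apply: le_trans (proj2 (hfa i) x Ax).
  rewrite -[fa i]invrK lef_pV2 ?posrE ?invr_gt0 //; last by lra.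
  rewrite (bigD1 i) //=.
  have : 0 <= \sum_(j | j != i) (fa j)^-1 by apply: sumr_ge0 => j _; rewrite invr_ge0 ltW // (hfa j).1.
  lra.
apply: le_trans (proj2 (hfb i) x Ax) _.
rewrite (bigD1 i) //=.
have : 0 <= \sum_(j | j != i) fb j by apply: sumr_ge0 => j _; exact: ltW (hfb j).1.
lra.
Qed.

Lemma net (R : realType) n (A : set 'rV[R]_n) : compact A -> forall d : R, 0 < d ->
  exists s : seq 'rV[R]_n, (forall z, z \in s -> A z) /\
    forall x, A x -> exists2 z, z \in s & forall i, `|z ord0 i - x ord0 i| < d.
Proof.
rewrite compact_cover => cA d d0.
have h1 : forall z, A z -> open (ball z d) by move=> z _; exact: ball_open.
have h2 : A `<=` cover A (fun z => ball z d).
  by move=> x Ax; exists x => //; exact: ballxx.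
have [D' sD cD] := cA _ A (fun z => ball z d) h1 h2.
exists (finmap.enum_fset D'); split.
  by move=> z /sD; rewrite inE.
move=> x /cD [z /= zD bz]; exists z => //.
by case: bz => _ /(_ ord0).
Qed.
Lemma rapprox (R : realType) (r tol : R) : 0 < tol -> exists q : rat, `|ratr q - r| <= tol.
Proof.
move=> t0; have [|q] := @rat_in_itvoo R (r - tol) (r + tol); first lra.
rewrite in_itv /= => /andP[h1 h2]; exists q; rewrite ler_norml; lra.
Qed.

Lemma wavg (R : realType) K (w v : 'I_K -> R) (j0 : 'I_K) (L lam th V : R) :
  (forall j, 0 < w j) -> (forall j, 0 <= v j <= V) -> 0 < L -> 0 < lam -> 0 <= th ->
  (forall j, (L / lam <= v j <= L * lam) \/ w j <= th * w j0) ->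
  L / lam * (1 - K%:R * th) * (\sum_j w j) <= \sum_j w j * v j /\
  \sum_j w j * v j <= (L * lam + V * (K%:R * th)) * \sum_j w j.
Proof.
move=> w0 v0 L0 lam0 th0 hj.
have wj0S : w j0 <= \sum_j w j.
  rewrite (bigD1 j0) //= lerDl; apply: sumr_ge0 => j _; exact: ltW.
have a0 : 0 < L / lam by rewrite divr_gt0.
have K0 : 0 <= K%:R :> R by [].
have wj00 := w0 j0.
split.
  apply: (@le_trans _ _ (\sum_j (L / lam) * (w j - th * w j0))).
    rewrite -mulr_sumr sumrB sumr_const card_ord -mulr_natl.
    set S := \sum_j w j in wj0S *; set a := L / lam in a0 *.
    have : 0 <= K%:R * th * (S - w j0) by rewrite mulr_ge0 ?mulr_ge0 // subr_ge0.
    nra.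
  apply: ler_sum => j _.
  have wj := w0 j; have /andP[vj1 vj2] := v0 j.
  have := mulr_ge0 (ltW a0) th0.
  case: (hj j) => [/andP[h1 h2]|h]; nra.
apply: (@le_trans _ _ (\sum_j (L * lam * w j + V * (th * w j0)))).
  apply: ler_sum => j _.
  have wj := w0 j; have /andP[vj1 vj2] := v0 j.
  have V0 : 0 <= V by apply: le_trans vj2.
  have := mulr_ge0 V0 (mulr_ge0 th0 (ltW wj00)).
  have := mulr_ge0 (mulr_ge0 (ltW L0) (ltW lam0)) (ltW wj).
  have := ler_wpM2l (ltW wj) vj2.
  case: (hj j) => [/andP[h1 h2]|h]; nra.
rewrite big_split /= -mulr_sumr sumr_const card_ord -mulr_natr.
set S := \sum_j w j in wj0S *.
have /andP[_ V0] := v0 j0. have V00 : 0 <= V by apply: le_trans V0; have /andP[] := v0 j0.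
have : 0 <= V * K%:R * th * (S - w j0) by rewrite !mulr_ge0 // subr_ge0.
nra.
Qed.
Lemma final_est (R : realType) (L r e t V Lmin : R) :
  0 < e -> e <= 1 -> 0 <= t -> t <= e/4 -> 0 < Lmin -> Lmin <= L -> V * t <= Lmin * e / 4 ->
  L / (1 + e/4) * (1 - t) <= r -> r <= L * (1 + e/4) + V * t ->
  `|(L - r) / Num.min L r| <= e.
Proof.
move=> e0 e1 t0 te Lm0 LmL Vt hlo hhi.
have lam0 : 0 < 1 + e/4 by lra.
have L0 : 0 < L by lra.
have hlo' : L * (1 - t) <= r * (1 + e/4).
  by rewrite -ler_pdivrMr // mulrAC.
have r0 : 0 < r.
  have : 0 < L * (1 - t) by apply: mulr_gt0; lra.
  nra.
rewrite /Num.min; case: ifPn => [Lr|]; last rewrite -leNgt => rL.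
  rewrite ler_norml; apply/andP; split.
    rewrite ler_pdivlMr //; nra.
  rewrite ler_pdivrMr //; nra.
rewrite ler_norml; apply/andP; split.
  rewrite ler_pdivlMr //; nra.
rewrite ler_pdivrMr //.
have h1 : (1 + e/4) <= (1 + e) * (1 - t) by nra.
have h2 : L * (1 + e / 4) <= (1 + e) * r * (1 + e/4) by nra.
nra.
Qed.
Lemma ln_key (R : realType) (u v : R) : 0 < u -> 0 < v -> v * (ln u - ln v) <= u - v.
Proof.
move=> u0 v0; have := expR_ge1Dx (ln u - ln v).
rewrite expRD expRN !lnK ?posrE // => h.
have : v * (1 + (ln u - ln v)) <= v * (u / v) by rewrite ler_pM2l.
rewrite mulrCA divff ?gt_eqF // mulr1; lra.
Qed.
Lemma lip_ln (R : realType) (a u v : R) : 0 < a -> a <= u -> a <= v ->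
  `|ln u - ln v| <= `|u - v| / a.
Proof.
move=> a0 au av; have u0 : 0 < u by lra. have v0 : 0 < v by lra.
have h1 := ln_key u0 v0; have h2 := ln_key v0 u0.
rewrite ler_pdivlMr //.
have [D0|D0] := leP 0 (ln u - ln v).
  rewrite (ger0_norm D0); apply: le_trans (ler_norm _); nra.
rewrite (ltr0_norm D0) distrC; apply: le_trans (ler_norm _); nra.
Qed.
Lemma lip_exp (R : realType) (b u v : R) : 0 < u -> 0 < v -> u <= b -> v <= b ->
  `|u - v| <= b * `|ln u - ln v|.
Proof.
move=> u0 v0 ub vb.
have h1 := ln_key u0 v0; have h2 := ln_key v0 u0.
have [D0|D0] := leP 0 (ln u - ln v).
  rewrite (ger0_norm D0) ler_norml; apply/andP; split; nra.
rewrite (ltr0_norm D0) ler_norml; apply/andP; split; nra.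
Qed.
Lemma gpos1 (R : realType) n K (c : 'I_K -> R) (alpha : 'I_K -> 'rV[R]_n) (x : 'rV[R]_n) :
  (forall i, 0 < x ord0 i) -> (forall k, 0 < c k) ->
  gpos ((1%N)%:R^-1) c alpha x = \sum_k c k * expR (\sum_i alpha k ord0 i * ln (x ord0 i)).
Proof.
move=> x0 c0; rewrite /gpos invr1.
have -> : map_mx (fun xi => xi `^ 1^-1) x = x.
  apply/matrixP => i j; rewrite mxE (ord1 i) invr1 powRr1 //; exact: ltW.
rewrite powRr1; last first.
  rewrite /posynomial; apply: sumr_ge0 => k _; apply: mulr_ge0; first exact: ltW.
  rewrite /monomial; apply: prodr_ge0 => i _; exact: powR_ge0.
rewrite /posynomial; apply: eq_bigr => k _; congr (_ * _).
rewrite /monomial expR_sum; apply: eq_bigr => i _.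
by rewrite /powR gt_eqF.
Qed.
Lemma quad_id (R : realType) n (M : R) (y Y : 'I_n -> R) :
 \sum_i (2 * M * Y i * y i - M * Y i ^+ 2) = M * \sum_i y i ^+2 - M * \sum_i (y i - Y i) ^+ 2.
Proof. by rewrite !mulr_sumr -sumrB; apply: eq_bigr => i _; ring. Qed.

Lemma exp_err (R : realType) n (M tau Ly : R) (Q : 'I_n -> R) (q : R) (y Y : 'I_n -> R) :
 0 <= tau -> 0 <= Ly -> (forall i, `|Q i - 2 * M * Y i| <= tau) ->
 `|q + M * \sum_i Y i ^+ 2| <= tau -> (forall i, `|y i| <= Ly) -> tau * (1 + n%:R * Ly) <= 1/2 ->
 `|(q + \sum_i Q i * y i) - (M * \sum_i y i ^+ 2 - M * \sum_i (y i - Y i) ^+ 2)| <= 1/2.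
Proof.
move=> t0 L0 hQ hq hy ht.
rewrite -quad_id.
have -> : q + \sum_i Q i * y i - \sum_i (2 * M * Y i * y i - M * Y i ^+ 2)
   = (q + M * \sum_i Y i ^+ 2) + \sum_i ((Q i - 2 * M * Y i) * y i).
  rewrite -addrA -sumrB mulr_sumr -addrA -big_split /=; congr (q + _).
  by apply: eq_bigr => i _; ring.
apply: le_trans (ler_normD _ _) _.
have : `|\sum_i ((Q i - 2 * M * Y i) * y i)| <= n%:R * (tau * Ly).
  apply: le_trans (ler_norm_sum _ _ _) _.
  apply: le_trans (@ler_sum _ _ _ _ _ (fun _ => tau * Ly) _) _.
    move=> i _; rewrite normrM; apply: ler_pM => //; exact: hQ.
  by rewrite sumr_const card_ord mulr_natl.
lra.
Qed.
Lemma bad_w (R : realType) n (M eta h : R) (y Yj Y0 : 'I_n -> R) (Ej E0 S : R) :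
 0 <= M -> 0 <= eta -> (exists i, eta <= `|Yj i - y i|) -> (forall i, `|Y0 i - y i| < h) ->
 n%:R * h ^+ 2 <= eta ^+ 2 / 2 ->
 `|Ej - (M * S - M * \sum_i (y i - Yj i) ^+ 2)| <= 1/2 ->
 `|E0 - (M * S - M * \sum_i (y i - Y0 i) ^+ 2)| <= 1/2 ->
 expR Ej <= expR (1 - M * eta ^+ 2 / 2) * expR E0.
Proof.
move=> M0 e0 [i hi] h0 hh hj hE0.
rewrite -expRD ler_expR.
have Dj : eta ^+ 2 <= \sum_i (y i - Yj i) ^+ 2.
  rewrite (bigD1 i) //=.
  have : 0 <= \sum_(k | k != i) (y k - Yj k) ^+ 2 by apply: sumr_ge0 => k _; exact: sqr_ge0.
  have : eta ^+ 2 <= (y i - Yj i) ^+ 2.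
    rewrite -[(y i - Yj i) ^+ 2]real_normK ?num_real // distrC ler_sqr ?nnegrE //.
  lra.
have D0 : \sum_i (y i - Y0 i) ^+ 2 <= n%:R * h ^+ 2.
  apply: le_trans (@ler_sum _ _ _ _ _ (fun _ => h ^+ 2) _) _.
    move=> k _; rewrite -real_normK ?num_real // distrC ler_sqr ?nnegrE //; first exact: ltW.
    by apply: le_trans (ltW (h0 k)).
  by rewrite sumr_const card_ord mulr_natl.
move: hj hE0; rewrite !ler_norml => /andP[a1 a2] /andP[b1 b2].
set Sj := \sum_i (y i - Yj i) ^+ 2 in Dj a1 a2 *.
set S0 := \sum_i (y i - Y0 i) ^+ 2 in D0 b1 b2 *.
have : M * (eta ^+ 2) <= M * Sj by apply: ler_wpM2l.
nra.
Qed.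
Lemma nh2 (R : realType) n (eta : R) : 0 < eta ->
  n%:R * (eta / (n%:R + 1)) ^+ 2 <= eta ^+ 2 / 2.
Proof.
move=> e0; have N0 : 0 <= n%:R :> R by [].
have n1 : 0 < n%:R + 1 :> R by lra.
rewrite expr_div_n mulrA ler_pdivrMr ?exprn_gt0 //.
have : 0 <= eta ^+ 2 * (n%:R ^+ 2 + 1) by rewrite mulr_ge0 ?sqr_ge0 // addr_ge0 ?sqr_ge0.
have -> : (n%:R + 1 : R) ^+ 2 = n%:R ^+ 2 + 2 * n%:R + 1 by ring.
nra.
Qed.

Unset Implicit Arguments.
Theorem theorem3 (R : realType) (n : nat) (A : set 'rV[R]_n) (l : 'rV[R]_n -> R) :
  compact A -> log_convex A ->
  {within A, continuous l} -> (forall x, A x -> 0 < l x) ->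
  forall eps : R, 0 < eps ->
  exists p : nat, (0 < p)%N /\
  exists (K : nat) (c : 'I_K -> R) (alpha : 'I_K -> 'rV[R]_n)
         (K' : nat) (c' : 'I_K' -> R) (alpha' : 'I_K' -> 'rV[R]_n),
    posynomial_data c alpha /\ rational_params c alpha /\
    posynomial_data c' alpha' /\ rational_params c' alpha' /\
    forall x, A x ->
      let r := gpos (p%:R^-1) c alpha x / gpos (p%:R^-1) c' alpha' x in
      `| (l x - r) / Num.min (l x) r | <= eps.
Proof.
move=> cA [Apos _] cl lpos eps eps0.
have [[x0 Ax0]|A0] := pselect (exists x, A x); last first.
  exists 1%N; split => //.
  exists 1%N, (fun _ => 1), (fun _ => 0), 1%N, (fun _ => 1), (fun _ => 0).
  have pd : posynomial_data (fun _ : 'I_1 => 1 : R) (fun _ => (0 : 'rV[R]_n)) by [].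
  have rp : rational_params (fun _ : 'I_1 => 1 : R) (fun _ => (0 : 'rV[R]_n)).
    split => [k i|k]; exists 0; by rewrite ?mxE ?ln1 rmorph0.
  do 4!split => //.
  by move=> x Ax; exfalso; apply: A0; exists x.
have [e e0 [e1 ee]] : exists2 e : R, 0 < e & e <= 1 /\ e <= eps.
  have [h|h] := leP eps 1; [exists eps | exists 1] => //; lra.
have An0 : A !=set0 by exists x0.
have [a [b [a0 b0 hab]]] := coord_bounds cA Apos An0.
have [cmin /set_mem Acmin hmin] := EVT_min_rV An0 cA cl.
have [cmax /set_mem Acmax hmax] := EVT_max_rV An0 cA cl.
set Lmin := l cmin. set Lmax := l cmax.
have Lmin0 : 0 < Lmin by exact: lpos.
have hL : forall x, A x -> Lmin <= l x <= Lmax.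
  by move=> x Ax; rewrite hmin ?hmax //; exact: mem_set.
set Ly := `|ln a| + `|ln b|.
have Ly0 : 0 <= Ly by rewrite addr_ge0.
have xpos : forall x, A x -> forall i, 0 < x ord0 i.
  by move=> x Ax i; apply: Apos.
have hy : forall x, A x -> forall i, `|ln (x ord0 i)| <= Ly.
  move=> x Ax i; have /andP[h1 h2] := hab x Ax i.
  have l1 : ln a <= ln (x ord0 i) by rewrite ler_ln ?posrE //; lra.
  have l2 : ln (x ord0 i) <= ln b by rewrite ler_ln ?posrE //; lra.
  have := ler_norm (ln b); have := ler_norm (- ln a); rewrite normrN.
  have : 0 <= `|ln a| by []. have : 0 <= `|ln b| by [].
  rewrite ler_norml /Ly; lra.
set lam0 := 1 + e / 16.
have eu0 : 0 < e / 16 * Lmin by rewrite mulr_gt0 // divr_gt0.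
have [du du0 hu] := unif_cont cA cl eu0.
set eta := du / b.
have eta0 : 0 < eta by rewrite divr_gt0.
have UC : forall x x', A x -> A x' -> (forall i, `|ln (x ord0 i) - ln (x' ord0 i)| < eta) ->
    l x' <= lam0 * l x.
  move=> x x' Ax Ax' hxx.
  have : `|l x - l x'| < e / 16 * Lmin.
    apply: hu => // i.
    have /andP[_ h1] := hab x Ax i; have /andP[_ h2] := hab x' Ax' i.
    apply: le_lt_trans (lip_exp (xpos x Ax i) (xpos x' Ax' i) h1 h2) _.
    by rewrite mulrC -ltr_pdivlMr //; exact: hxx.
  have /andP[h1 _] := hL x Ax.
  rewrite /lam0 ltr_norml => /andP[h2 _].
  have : e / 16 * Lmin <= e / 16 * l x by rewrite ler_pM2l // divr_gt0.
  lra.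
set h := eta / (n%:R + 1).
have h0 : 0 < h by rewrite divr_gt0 //; have : 0 <= n%:R :> R by []; lra.
have [s [sA hs]] := net cA (mulr_gt0 h0 a0).
pose K := size s.
pose zc (j : 'I_K) := nth x0 s j.
have zcA : forall j, A (zc j) by move=> j; apply: sA; exact: mem_nth.
have hnet : forall x, A x -> exists j0 : 'I_K, forall i, `|ln (zc j0 ord0 i) - ln (x ord0 i)| < h.
  move=> x Ax; have [z zs hz] := hs x Ax.
  have zi : (index z s < size s)%N by rewrite index_mem.
  exists (Ordinal zi) => i; rewrite /zc /= nth_index //.
  have /andP[h1 _] := hab x Ax i; have /andP[h2 _] := hab z (sA z zs) i.
  apply: le_lt_trans (lip_ln a0 h2 h1) _.
  by rewrite ltr_pdivrMr.
have [j00 _] := hnet x0 Ax0.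
have K0 : (0 < K)%N by apply: leq_ltn_trans (leq0n j00) (ltn_ord j00).
set lam1 := 1 + e / 16.
set V := lam1 * Lmax.
have Lmax0 : 0 < Lmax by have /andP[h1 h2] := hL x0 Ax0; lra.
have V0 : 0 < V by rewrite mulr_gt0 //; rewrite /lam1; lra.
set t := e / 4 * Lmin / (Lmin + V).
have t0 : 0 < t by rewrite !mulr_gt0 ?invr_gt0 ?divr_gt0 //; lra.
have ht : t * (Lmin + V) = e / 4 * Lmin by rewrite /t divfK // gt_eqF //; lra.
have KR0 : 0 < K%:R :> R by rewrite ltr0n.
set th := t / K%:R.
have th0 : 0 < th by rewrite divr_gt0.
have Kth : K%:R * th = t by rewrite /th mulrCA divff ?gt_eqF // mulr1.
set M := 2 * `|1 - ln th| / eta ^+ 2.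
have M0 : 0 <= M by rewrite divr_ge0 ?sqr_ge0 // mulr_ge0.
have Meta : M * eta ^+ 2 / 2 = `|1 - ln th|.
  by rewrite /M; field; exact: lt0r_neq0.
set tau := (2 * (1 + n%:R * Ly))^-1.
have nLy : 0 <= n%:R * Ly by rewrite mulr_ge0.
have tau0 : 0 < tau by rewrite invr_gt0; lra.
have htau : tau * (1 + n%:R * Ly) <= 1/2.
  have hne : 1 + n%:R * Ly != 0 by apply: lt0r_neq0; lra.
  suff -> : tau * (1 + n%:R * Ly) = 1/2 by [].
  by rewrite /tau; field.
pose Y (j : 'I_K) (i : 'I_n) := ln (zc j ord0 i).
have hQ0 : forall j, exists Qj : 'I_n -> rat, forall i, `|ratr (Qj i) - 2 * M * Y j i| <= tau.
  move=> j; have [f hf] := choice (fun i => rapprox (2 * M * Y j i) tau0).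
  by exists f.
have [Q hQ] := choice hQ0.
have [q' hq'] := choice (fun j => rapprox (- (M * \sum_i Y j i ^+ 2)) tau0).
have e16 : 0 < e / 16 by rewrite divr_gt0.
have lam10 : 0 < ln lam1 by apply: ln_gt0; rewrite /lam1; lra.
have [sr hsr] := choice (fun j => rapprox (ln (l (zc j))) lam10).
pose alpha (j : 'I_K) : 'rV[R]_n := \row_i ratr (Q j i).
pose c' (j : 'I_K) := expR (ratr (q' j) : R).
pose c (j : 'I_K) := expR (ratr (q' j + sr j) : R).
exists 1%N; split => //.
exists K, c, alpha, K, c', alpha.
have pdc : posynomial_data c alpha by split => // k; exact: expR_gt0.
have pdc' : posynomial_data c' alpha by split => // k; exact: expR_gt0.
have rp : forall qq : 'I_K -> rat, rational_params (fun j => expR (ratr (qq j) : R)) alpha.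
  move=> qq; split => [k i|k]; first by exists (Q k i); rewrite mxE.
  by exists (qq k); rewrite expRK.
split; first exact: pdc. split; first exact: (rp (fun j => q' j + sr j)).
split; first exact: pdc'. split; first exact: (rp q').
move=> x Ax /=.
have gx := xpos x Ax.
have hc : forall k, 0 < c k by move=> k; exact: expR_gt0.
have hc' : forall k, 0 < c' k by move=> k; exact: expR_gt0.
rewrite (gpos1 _ gx hc) (gpos1 _ gx hc').
pose y i := ln (x ord0 i).
pose w j := c' j * expR (\sum_i alpha j ord0 i * y i).
pose v j := expR (ratr (sr j) : R).
have num : \sum_k c k * expR (\sum_i alpha k ord0 i * ln (x ord0 i)) = \sum_j w j * v j.
  by apply: eq_bigr => j _; rewrite /w /v /c /c' /y rmorphD expRD /= mulrAC.
have den : \sum_k c' k * expR (\sum_i alpha k ord0 i * ln (x ord0 i)) = \sum_j w j by [].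
rewrite num den.
have [j0 hj0] := hnet x Ax.
have wpos : forall j, 0 < w j by move=> j; rewrite mulr_gt0 // expR_gt0.
have hw : forall j, w j = expR (ratr (q' j) + \sum_i ratr (Q j i) * y i).
  move=> j; rewrite /w /c' expRD; congr (_ * expR _).
  by apply: eq_bigr => i _; rewrite mxE.
have herr : forall j, `|(ratr (q' j) + \sum_i ratr (Q j i) * y i)
     - (M * \sum_i y i ^+ 2 - M * \sum_i (y i - Y j i) ^+ 2)| <= 1/2.
  move=> j; apply: (exp_err (ltW tau0) Ly0 _ _ _ htau).
  - by move=> i; exact: hQ.
  - by have := hq' j; rewrite opprK.
  - by move=> i; exact: hy.
have hv : forall j, l (zc j) <= lam1 * v j /\ v j <= lam1 * l (zc j).
  move=> j; have := hsr j; rewrite ler_norml => /andP[s1 s2].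
  have lz0 : 0 < l (zc j) by exact: lpos.
  have lam1p : 0 < lam1 by rewrite /lam1; lra.
  have E1 : lam1 * v j = expR (ln lam1 + ratr (sr j)) by rewrite expRD lnK.
  have E2 : lam1 * l (zc j) = expR (ln lam1 + ln (l (zc j))) by rewrite expRD !lnK.
  have E3 : l (zc j) = expR (ln (l (zc j))) by rewrite lnK.
  split; first by rewrite E1 {1}E3 ler_expR; lra.
  by rewrite E2 /v ler_expR; lra.
set L := l x.
have L0 : 0 < L by exact: lpos.
have lamp : 0 < 1 + e / 4 by lra.
have hvV : forall j, 0 <= v j <= V.
  move=> j; have [_ h2] := hv j; have /andP[_ h3] := hL _ (zcA j).
  apply/andP; split; first by apply: ltW; exact: expR_gt0.
  apply: le_trans h2 _; rewrite /V ler_pM2l //; rewrite /lam1; lra.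
have hcase : forall j, (L / (1 + e / 4) <= v j <= L * (1 + e / 4)) \/ w j <= th * w j0.
  move=> j; have [good|] := boolP [forall i, `|Y j i - y i| < eta].
    left; move/forallP: good => good.
    have u1 : L <= lam0 * l (zc j) by apply: UC => //; exact: good.
    have u2 : l (zc j) <= lam0 * L.
      apply: UC => // i; rewrite distrC; exact: good.
    have [h1 h2] := hv j.
    have lz0 : 0 < l (zc j) by exact: lpos.
    have vj0 : 0 < v j by exact: expR_gt0.
    have ll : lam0 * lam1 <= 1 + e / 4 by rewrite /lam0 /lam1; nra.
    have l00 : 0 < lam0 by rewrite /lam0; lra.
    have l10 : 0 < lam1 by rewrite /lam1; lra.
    apply/andP; split.
      rewrite ler_pdivrMr //; nra.
    nra.
  rewrite negb_forall => /existsP [i0]; rewrite -leNgt => hi0.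
  right; rewrite !hw.
  apply: le_trans (bad_w (h := h) (S := \sum_i y i ^+ 2) M0 (ltW eta0) _ _ _ (herr j) (herr j0)) _.
  + by exists i0.
  + by move=> i; exact: hj0.
  + exact: nh2.
  rewrite ler_wpM2r // ?expR_ge0 // Meta -{2}(lnK th0) ler_expR.
  have := ler_norm (1 - ln th); lra.
have [lo hi] := @wavg R K w v j0 L (1 + e / 4) th V wpos hvV L0 lamp (ltW th0) hcase.
set SW := \sum_j w j in lo hi *.
set SWV := \sum_j w j * v j in lo hi *.
have SW0 : 0 < SW.
  have := wpos j0; have : w j0 <= SW.
    rewrite /SW (bigD1 j0) //= lerDl; apply: sumr_ge0 => j _; exact: ltW.
  lra.
apply: le_trans ee.
have /andP[hL1 _] := hL x Ax.
apply: (@final_est R L (SWV / SW) e (K%:R * th) V Lmin) => //.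
- rewrite Kth; exact: ltW.
- rewrite Kth; nra.
- rewrite Kth; nra.
- by rewrite ler_pdivlMr.
- by rewrite ler_pdivrMr.
Qed.
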